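(* Consider an open quantum system on a finite-dimensional Hilbert space $\mathcal H$ with Hamiltonian $H$ and a single coupling operator $L$, and let $V$ be a Lyapunov operator of the system (commuting with $H$). If $cV\le\mathfrak D(V)$ for some constant $c>0$, then for every initial density state the state trajectory $\rho_t$ converges to $Z_V$, i.e. every limit point of $\rho_t$ as $t\to\infty$ lies in $Z_V$.
   Context: The density state (positive semidefinite, trace one) evolves by $\dot\rho_t=-i[H,\rho_t]+L\rho_tL^\dagger-\tfrac12L^\dagger L\rho_t-\tfrac12\rho_tL^\dagger L$; for an observable $X$ commuting with $H$ the generator is $\mathcal G(X)=L^\dagger XL-\tfrac12L^\dagger LX-\tfrac12XL^\dagger L$ and $\frac{d}{dt}\operatorname{tr}(X\rho_t)=\operatorname{tr}(\mathcal G(X)\rho_t)$. Standing assumption: the observables considered commute with $H$. A Lyapunov operator is a self-adjoint $V\ge0$ whose smallest eigenvalue is $0$ and with $\mathcal G(V)\le0$. The dissipation functional is $\mathfrak D(X)=\mathcal G(X^\dagger X)-\mathcal G(X^\dagger)X-X^\dagger\mathcal G(X)=[L^\dagger,X^\dagger][X,L]$. $Z_V=\{\rho \text{ density state}:\operatorname{tr}(V\rho)=0\}$; convergence of states means convergence of $\operatorname{tr}(\rho Y)$ for all operators $Y$. *)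

(* Defs.v *)
From HB Require Import structures.
From mathcomp Require Import all_boot all_order all_algebra.
From mathcomp Require Import all_classical all_reals all_analysis.
From mathcomp.real_closed Require Import complex.
Set Implicit Arguments. Unset Strict Implicit. Unset Printing Implicit Defensive.
Import Order.TTheory GRing.Theory Num.Theory.
Import numFieldNormedType.Exports.
Local Open Scope classical_set_scope.
Local Open Scope ring_scope.

Section Lindblad.
Variable R : realType.
Local Notation C := R[i].
Variable n : nat.
Local Notation M := 'M[C]_n.

Definition mxadj (A : M) : M := \matrix_(i, j) (A j i)^*%C.

Definition selfadj (A : M) : Prop := mxadj A = A.

Definition psd (A : M) : Prop :=
  selfadj A /\ forall v : 'cV[C]_n, 0 <= ((\matrix_(i, j) (v j i)^*%C) *m A *m v) 0 0.

Definition mxle (A B : M) : Prop := psd (B - A).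

Definition density (rho : M) : Prop := psd rho /\ \tr rho = 1.

(* Lindblad generator (Heisenberg picture, for observables commuting with H) *)
Definition gen (L X : M) : M :=
  mxadj L *m X *m L - 2^-1 *: (mxadj L *m L *m X) - 2^-1 *: (X *m mxadj L *m L).

Definition lindblad (H L rho : M) : M :=
  - 'i *: (H *m rho - rho *m H) + L *m rho *m mxadj L
  - 2^-1 *: (mxadj L *m L *m rho) - 2^-1 *: (rho *m mxadj L *m L).

Definition dissip (L X : M) : M :=
  gen L (mxadj X *m X) - gen L (mxadj X) *m X - mxadj X *m gen L X.

Definition lyapunov (L V : M) : Prop :=
  selfadj V /\ psd V /\ eigenvalue V 0 /\ mxle (gen L V) 0.

Definition ZV (V : M) : set M := [set rho | density rho /\ \tr (V *m rho) = 0].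

Definition trajectory (H L : M) (rho : R -> M) : Prop :=
  (forall t : R, 0 <= t -> density (rho t)) /\
  (forall i j, (fun t => complex.Re (rho t i j)) @ (0:R)^'+ --> complex.Re (rho 0 i j) /\
               (fun t => complex.Im (rho t i j)) @ (0:R)^'+ --> complex.Im (rho 0 i j)) /\
  (forall t : R, 0 < t -> forall i j,
     is_derive t (1 : R) (fun s => complex.Re (rho s i j)) (complex.Re (lindblad H L (rho t) i j)) /\
     is_derive t (1 : R) (fun s => complex.Im (rho s i j)) (complex.Im (lindblad H L (rho t) i j))).

(* sigma is a limit point of rho_t as t -> oo, convergence of states meaning
   convergence of tr(rho Y) for every operator Y (in C, i.e. of its real and
   imaginary parts) *)
Definition traj_limit_point (rho : R -> M) (sigma : M) : Prop :=
  exists s : nat -> R, s @ \oo --> +oo /\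
    forall Y : M,
      (fun k => complex.Re (\tr (rho (s k) *m Y))) @ \oo --> complex.Re (\tr (sigma *m Y)) /\
      (fun k => complex.Im (\tr (rho (s k) *m Y))) @ \oo --> complex.Im (\tr (sigma *m Y)).

End Lindblad.

(* Main.v *)
Require Import Defs.
From HB Require Import structures.
From mathcomp Require Import all_boot all_order all_algebra.
From mathcomp Require Import all_classical all_reals all_analysis.
From mathcomp.real_closed Require Import complex.
From mathcomp Require Import ring lra.
Import Order.TTheory GRing.Theory Num.Theory.
Import numFieldNormedType.Exports.
Local Open Scope classical_set_scope.
Local Open Scope ring_scope.


Section Alg.
Variable R : realType.
Local Notation C := R[i].
Variable n : nat.
Local Notation M := 'M[C]_n.

Lemma conjcE (x : C) : (x^*)%C = x^*.
Proof. by []. Qed.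

Lemma mxadjE (A : M) i j : mxadj A i j = (A j i)^*.
Proof. by rewrite /mxadj mxE. Qed.

Lemma mxadjK (A : M) : mxadj (mxadj A) = A.
Proof. by apply/matrixP => i j; rewrite !mxadjE conjCK. Qed.

Lemma mxadjM (A B : M) : mxadj (A *m B) = mxadj B *m mxadj A.
Proof.
apply/matrixP => i j; rewrite mxadjE !mxE rmorph_sum; apply: eq_bigr => k _.
by rewrite /mxadj !mxE rmorphM mulrC.
Qed.

Lemma mxadjD (A B : M) : mxadj (A + B) = mxadj A + mxadj B.
Proof. by apply/matrixP => i j; rewrite /mxadj !mxE rmorphD. Qed.

Lemma mxadjN (A : M) : mxadj (- A) = - mxadj A.
Proof. by apply/matrixP => i j; rewrite /mxadj !mxE rmorphN. Qed.

Lemma mxadjB (A B : M) : mxadj (A - B) = mxadj A - mxadj B.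
Proof. by rewrite mxadjD mxadjN. Qed.

Lemma mxadjZ a (A : M) : mxadj (a *: A) = a^* *: mxadj A.
Proof. by apply/matrixP => i j; rewrite /mxadj !mxE rmorphM. Qed.

Lemma mxadj_scalar a : mxadj (a%:M : M) = (a^*)%:M.
Proof.
apply/matrixP => i j; rewrite /mxadj !mxE eq_sym.
by rewrite conjcE rmorphMn.
Qed.

Definition vst (v : 'cV[C]_n) : 'rV[C]_n := \matrix_(i, j) (v j i)^*%C.
Definition q (X : M) (v : 'cV[C]_n) : C := (vst v *m X *m v) 0 0.

Lemma psd_q X : psd X -> forall v, 0 <= q X v.
Proof. by case. Qed.

Lemma vst_mul (A : M) v : vst (A *m v) = vst v *m mxadj A.
Proof.
apply/matrixP => i j; rewrite !mxE rmorph_sum; apply: eq_bigr => k _.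
by rewrite !mxE rmorphM mulrC.
Qed.

Lemma qD A B v : q (A + B) v = q A v + q B v.
Proof. by rewrite /q mulmxDr mulmxDl mxE. Qed.
Lemma qN A v : q (- A) v = - q A v.
Proof. by rewrite /q mulmxN mulNmx mxE. Qed.
Lemma qB A B v : q (A - B) v = q A v - q B v.
Proof. by rewrite qD qN. Qed.
Lemma qZ a A v : q (a *: A) v = a * q A v.
Proof. by rewrite /q -scalemxAr -scalemxAl mxE. Qed.
Lemma q_conj (B N : M) v : q (mxadj B *m N *m B) v = q N (B *m v).
Proof. by rewrite /q vst_mul !mulmxA. Qed.


Lemma adj_tr (A : M) : mxadj A = map_mx Num.conj (trmx A).
Proof. by apply/matrixP => i j; rewrite /mxadj !mxE. Qed.

Lemma q_entry (P Y : M) i :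
  q Y (mxadj P *m delta_mx i 0) = (P *m Y *m mxadj P) i i.
Proof.
rewrite /q vst_mul mxadjK.
have -> : vst (delta_mx i 0 : 'cV[C]_n) = delta_mx 0 i.
  apply/matrixP => a b; rewrite !mxE.
  by rewrite conjc_nat andbC.
by rewrite -!mulmxA -rowE !mulmxA -colE !mxE.
Qed.

Lemma tr_decomp (rho : M) : selfadj rho ->
  exists u : 'I_n -> 'cV[C]_n,
    forall X : M, \tr (X *m rho) = \sum_i q X (u i) * q rho (u i).
Proof.
move=> sa.
have nrm : rho \is normalmx.
  rewrite qualifE; apply/eqP.
  by rewrite -adj_tr sa.
have Hr := (orthomx_spectralP nrm).
set P := spectralmx rho in Hr; set d := spectral_diag rho in Hr.
have Pu : P \is unitarymx := spectral_unitarymx rho.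
have PPa : P *m mxadj P = 1%:M by rewrite adj_tr; exact/unitarymxP.
have iP : invmx P = mxadj P by rewrite adj_tr invmx_unitary.
have PaP : mxadj P *m P = 1%:M by rewrite -iP mulVmx // spectral_unit.
exists (fun i => mxadj P *m delta_mx i 0) => X.
have dE : forall i, q rho (mxadj P *m delta_mx i 0) = d 0 i.
  move=> i; rewrite q_entry Hr iP.
  rewrite !mulmxA PPa mul1mx -mulmxA PPa mulmx1 mxE eqxx mulr1n //.
under eq_bigr => i _ do rewrite q_entry dE.
rewrite Hr iP !mulmxA mxtrace_mulC !mulmxA mul_mx_diag /mxtrace.
by apply: eq_bigr => i _; rewrite mxE.
Qed.

Lemma tr_psd (rho X : M) : psd rho -> (forall v, 0 <= q X v) -> 0 <= \tr (X *m rho).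
Proof.
move=> [sa pr] pX; have [u ->] := tr_decomp _ sa.
by apply: sumr_ge0 => i _; apply: mulr_ge0; [apply: pX | apply: pr].
Qed.


Lemma q1E (w : 'cV[C]_n) : q 1%:M w = \sum_k `|w k 0| ^+ 2.
Proof.
rewrite /q mulmx1 mxE; apply: eq_bigr => k _.
by rewrite mxE normCKC.
Qed.

Lemma qE (X : M) (w : 'cV[C]_n) :
  q X w = \sum_j \sum_k (w k 0)^* * X k j * w j 0.
Proof.
rewrite /q mxE; apply: eq_bigr => j _; rewrite mxE big_distrl /=.
by apply: eq_bigr => k _; rewrite mxE.
Qed.

Lemma term_le (S : C) (F : 'I_n -> C) k :
  (forall i, 0 <= F i) -> S = \sum_i F i -> F k <= S.
Proof.
move=> F0 ->; rewrite (bigD1 k) //= lerDl.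
by apply: sumr_ge0 => i _.
Qed.

Lemma q_bound (X : M) :
  exists b : C, 0 < b /\ forall w, `|q X w| <= b * q 1%:M w.
Proof.
exists (2 * \sum_j \sum_k `|X k j| + 1); split.
  apply: ltr_wpDl; last by [].
  by apply: mulr_ge0 => //; apply: sumr_ge0 => j _; apply: sumr_ge0.
move=> w; rewrite qE q1E; set S := \sum_k `|w k 0| ^+ 2.
have S0 : 0 <= S by apply: sumr_ge0.
apply: (le_trans (ler_norm_sum _ _ _)).
apply: le_trans (_ : \sum_j \sum_k `|X k j| * (2 * S) <= _).
  apply: ler_sum => j _; apply: (le_trans (ler_norm_sum _ _ _)).
  apply: ler_sum => k _; rewrite !normrM norm_conjC.
  rewrite [_ * `|X k j|]mulrC -mulrA; apply: ler_wpM2l => //.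
  have hk : `|w k 0| ^+ 2 <= S.
    by apply: (@term_le _ (fun i => `|w i 0| ^+ 2)) => // i; apply: exprn_ge0.
  have hj : `|w j 0| ^+ 2 <= S.
    by apply: (@term_le _ (fun i => `|w i 0| ^+ 2)) => // i; apply: exprn_ge0.
  have am := (real_leif_mean_square_scaled (normr_real (w k 0)) (normr_real (w j 0))).1.
  apply: le_trans (_ : `|w k 0| * `|w j 0| *+ 2 <= _).
    by rewrite mulr2n lerDl mulr_ge0.
  apply: (le_trans am); rewrite mulr2n mulrDl mul1r.
  by apply: lerD.
have -> : \sum_j \sum_k `|X k j| * (2 * S) = (\sum_j \sum_k `|X k j|) * (2 * S).
  by rewrite big_distrl; apply: eq_bigr => j _; rewrite big_distrl.
rewrite mulrA (mulrC _ 2).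
by apply: ler_wpM2r => //; rewrite lerDl.
Qed.


Lemma q_bound_psd (X : M) : (forall w, 0 <= q X w) ->
  exists b : C, 0 < b /\ forall w, q X w <= b * q 1%:M w.
Proof.
move=> pX; have [b [b0 hb]] := q_bound X; exists b; split => // w.
by rewrite -(ger0_norm (pX w)).
Qed.

Lemma q_sq (V : M) v : selfadj V -> q (V *m V) v = q 1%:M (V *m v).
Proof. by move=> sa; rewrite -q_conj sa mulmx1. Qed.

Lemma sq_le (V : M) : selfadj V -> (forall v, 0 <= q V v) ->
  exists b : C, 0 < b /\ forall v, q (V *m V) v <= b * q V v.
Proof.
move=> sa pV; have [b [b0 hb]] := q_bound_psd _ pV; exists b; split => // v.
set s := b^-1.
have s0 : 0 <= s by rewrite invr_ge0 ltW.
have sb : s * b = 1 by rewrite mulVf // gt_eqF.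
set B : M := 1%:M - s *: V.
have aB : mxadj B = B.
  by rewrite /B mxadjB mxadj_scalar mxadjZ (geC0_conj s0) sa conjC1.
have h := pV (B *m v); rewrite -q_conj aB in h.
have eB : B *m V *m B = V - s *: (V *m V) - s *: (V *m V) + (s * s) *: (V *m V *m V).
  rewrite /B mulmxBl mul1mx -scalemxAl mulmxBr mulmx1 -scalemxAr mulmxBl.
  by rewrite -scalemxAl scalerBr scalerA opprB addrA [LHS]addrAC.
rewrite eB qD !qB !qZ in h.
have hc : q (V *m V *m V) v <= b * q (V *m V) v.
  by rewrite -{1}sa q_conj q_sq.
set a := q V v in h *; set b' := q (V *m V) v in h hc *; set c := q (V *m V *m V) v in h hc.
have h2 : 0 <= a - s * b'.
  apply: (le_trans h).
  apply: le_trans (_ : _ <= a - s * b' - s * b' + (s * s) * (b * b')) _.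
    by rewrite lerD2l; apply: ler_wpM2l => //; apply: mulr_ge0.
  by rewrite mulrA -(mulrA s s b) sb mulr1 subrK.
rewrite subr_ge0 in h2.
have -> : b' = b * (s * b') by rewrite mulrA (mulrC b) sb mul1r.
by apply: ler_wpM2l => //; apply: ltW.
Qed.


Lemma acomb (a b c d e f : M) : (a + b) - (c + d) - (e + f) = (a - c - e) + (b - d - f).
Proof. by rewrite !opprD (addrACA a b (-c) (-d)) (addrACA (a - c) (b - d) (-e) (-f)). Qed.

Lemma arr (a b c d : M) : a - b + c - d = a - d - b + c.
Proof. by rewrite addrAC [a - b - d]addrAC. Qed.

Lemma genD (L A B : M) : gen L (A + B) = gen L A + gen L B.
Proof.
rewrite /gen mulmxDr mulmxDl !mulmxDl !mulmxDr scalerDr scalerDr.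
by rewrite acomb.
Qed.

Lemma genZ (L A : M) k : gen L (k *: A) = k *: gen L A.
Proof.
by rewrite /gen -!scalemxAr -!scalemxAl !scalerBr !scalerA (mulrC k).
Qed.

Lemma genB (L A B : M) : gen L (A - B) = gen L A - gen L B.
Proof. by rewrite -scaleN1r genD genZ scaleN1r. Qed.

Lemma genVV (L V : M) : selfadj V ->
  gen L (V *m V) = dissip L V + gen L V *m V + V *m gen L V.
Proof. by move=> sa; rewrite /dissip sa addrAC subrK subrK. Qed.


Lemma main_ineq (L V : M) (c : R) : selfadj V -> (forall v, 0 <= q V v) ->
  (forall v, 0 <= q (0 - gen L V) v) -> 0 < c ->
  (forall v, 0 <= q (dissip L V - c%:C%C *: V) v) ->
  exists K : C, 0 < K /\
    forall v, 0 <= q (gen L (V *m V - K *: V) - (c%:C%C / 2) *: V) v.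
Proof.
move=> sa pV pN c0 pD.
set N := 0 - gen L V in pN *.
have gN : gen L V = - N by rewrite /N sub0r opprK.
clearbody N.
have [bN [bN0 hN]] := q_bound_psd _ pN.
have [bV [bV0 hV]] := sq_le _ sa pV.
have cC0 : 0 < c%:C%C :> C by rewrite ltcR.
set K := 2 * bN * bV / c%:C%C.
have K0 : 0 < K.
  rewrite /K; apply: divr_gt0; last exact: cC0.
  apply: mulr_gt0; last exact: bV0.
  by apply: mulr_gt0; [rewrite ltr0n | exact: bN0].
have KE : K^-1 * (bN * bV) = c%:C%C / 2.
  rewrite /K; field.
  by rewrite (gt_eqF cC0) (gt_eqF bV0) (gt_eqF bN0).
clearbody K.
exists K; split; first exact: K0.
move=> v.
have hK : mxadj (K%:M - V) = K%:M - V.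
  by rewrite mxadjB mxadj_scalar sa (geC0_conj (ltW K0)).
have p2 := pN ((K%:M - V) *m v); rewrite -q_conj hK in p2.
have p1 := pD v; rewrite qB qZ in p1.
have p3 : q (V *m N *m V) v <= bN * bV * q V v.
  rewrite -{1}sa q_conj -mulrA; apply: (le_trans (hN _)).
  rewrite -q_sq; last exact: sa.
  by apply: ler_wpM2l; [apply: ltW | apply: hV].
have e2 : (K%:M - V) *m N *m (K%:M - V) =
   (K * K) *: N - K *: (N *m V) - K *: (V *m N) + V *m N *m V.
  rewrite mulmxBl mul_scalar_mx mulmxBr mul_mx_scalar mulmxBl.
  by rewrite -scalemxAl scalerBr scalerA opprB addrA arr.
rewrite e2 qD !qB !qZ in p2.
rewrite qB qZ genB genZ (genVV L V sa) gN.
set D := dissip L V in p1 *; clearbody D.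
rewrite qB !qD qZ mulNmx mulmxN !qN.
set a := q V v in p1 p3 *; set d := q D v in p1 *.
set nV := q (N *m V) v in p2 *; set vN := q (V *m N) v in p2 *.
set nn := q N v in p2 *; set w := q (V *m N *m V) v in p2 p3 *.
clearbody a d nV vN nn w.
have -> : d - nV - vN - K * - nn - c%:C%C / 2 * a =
   (d - c%:C%C * a) + K^-1 * (K * K * nn - K * nV - K * vN + w)
   + (c%:C%C / 2 * a - K^-1 * w).
  by field; rewrite (gt_eqF K0).
apply: addr_ge0; first apply: addr_ge0.
- exact: p1.
- by apply: mulr_ge0; [rewrite invr_ge0 ltW | exact: p2].
rewrite subr_ge0 -KE -mulrA; apply: ler_wpM2l; first by rewrite invr_ge0 ltW.
exact: p3.
Qed.



End Alg.

Section B.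
Variable R : realType.
Local Notation C := R[i].
Variable n : nat.
Local Notation M := 'M[C]_n.

Lemma trlin (X a b c d : M) k1 k2 :
  \tr (X *m (k1 *: a + b - k2 *: c - k2 *: d)) =
  k1 * \tr (X *m a) + \tr (X *m b) - k2 * \tr (X *m c) - k2 * \tr (X *m d).
Proof.
by rewrite !mulmxDr !mulmxN -!scalemxAr !mxtraceD !raddfN /= !mxtraceZ.
Qed.

Lemma rlin (rho a b c : M) k :
  \tr ((a - k *: b - k *: c) *m rho) =
  \tr (a *m rho) - k * \tr (b *m rho) - k * \tr (c *m rho).
Proof.
by rewrite !mulmxDl !mulNmx -!scalemxAl !mxtraceD !raddfN /= !mxtraceZ.
Qed.

Lemma tr_lind (H L X rho : M) : X *m H = H *m X ->
  \tr (X *m lindblad H L rho) = \tr (gen L X *m rho).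
Proof.
move=> XH.
rewrite /lindblad /gen trlin rlin.
have h1 : \tr (X *m (H *m rho)) = \tr (X *m (rho *m H)).
  transitivity (\tr (H *m X *m rho)); first by rewrite -XH mulmxA.
  by rewrite -mulmxA mxtrace_mulC mulmxA.
have h2 : \tr (X *m (L *m rho *m mxadj L)) = \tr (mxadj L *m X *m L *m rho).
  by rewrite mulmxA mxtrace_mulC !mulmxA.
have h3 : \tr (X *m (mxadj L *m L *m rho)) = \tr (X *m mxadj L *m L *m rho).
  by rewrite !mulmxA.
have h4 : \tr (X *m (rho *m mxadj L *m L)) = \tr (mxadj L *m L *m X *m rho).
  by rewrite !mulmxA -(mulmxA (X *m rho)) mxtrace_mulC !mulmxA.
rewrite mulmxBr raddfB /= h1 h2 h3 h4 subrr mulr0 add0r.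
by rewrite addrAC.
Qed.

End B.

Section Cn.
Variable R : realType.
Local Notation C := R[i].
Variable n : nat.
Local Notation M := 'M[C]_n.

Lemma ReDc (x y : C) : complex.Re (x + y) = complex.Re x + complex.Re y.
Proof. by case: x; case: y. Qed.
Lemma Re0c : complex.Re (0 : C) = 0.
Proof. by []. Qed.
Lemma ReNc (x : C) : complex.Re (- x) = - complex.Re x.
Proof. by case: x. Qed.
Lemma ReBc (x y : C) : complex.Re (x - y) = complex.Re x - complex.Re y.
Proof. by rewrite ReDc ReNc. Qed.
Lemma ReMc (x y : C) : complex.Re (x * y) = complex.Re x * complex.Re y - complex.Im x * complex.Im y.
Proof. by case: x => a b; case: y. Qed.
Lemma Re_sumc (F : 'I_n -> C) : complex.Re (\sum_i F i) = \sum_i complex.Re (F i).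
Proof. exact: (big_morph _ ReDc Re0c). Qed.
Lemma ReRM (k : R) (x : C) : complex.Re (k%:C%C * x) = k * complex.Re x.
Proof. by rewrite ReMc /= mul0r subr0. Qed.
Lemma Re_ge0 (x : C) : 0 <= x -> 0 <= complex.Re x.
Proof. by rewrite lecE => /andP[_]. Qed.
Lemma Im_ge0 (x : C) : 0 <= x -> complex.Im x = 0.
Proof. by rewrite lecE => /andP[/eqP ->]. Qed.

Lemma Re_tr (X A : M) : complex.Re (\tr (X *m A)) =
  \sum_i \sum_j (complex.Re (X i j) * complex.Re (A j i) - complex.Im (X i j) * complex.Im (A j i)).
Proof.
rewrite /mxtrace Re_sumc; apply: eq_bigr => i _.
by rewrite mxE Re_sumc; apply: eq_bigr => j _; rewrite ReMc.
Qed.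

Lemma deriv_tr (H L X : M) (rho : R -> M) (t : R) : trajectory H L rho -> 0 < t ->
  is_derive t 1 (fun s => complex.Re (\tr (X *m rho s)))
    (complex.Re (\tr (X *m lindblad H L (rho t)))).
Proof.
move=> [_ [_ hd]] t0.
have -> : (fun s => complex.Re (\tr (X *m rho s))) =
  \sum_i \sum_j ((complex.Re (X i j)) \*: (fun s => complex.Re (rho s j i)) -
                  (complex.Im (X i j)) \*: (fun s => complex.Im (rho s j i))).
  apply/funext => s; rewrite Re_tr fct_sumE; apply: eq_bigr => i _.
  by rewrite fct_sumE.
rewrite Re_tr; apply: is_derive_sum => i; apply: is_derive_sum => j.
have [h1 h2] := hd t t0 j i.
exact: is_deriveB.
Qed.


Lemma mvt_pos (f df : R -> R) (x y : R) : 0 < x -> x <= y ->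
  (forall t : R, 0 < t -> is_derive t 1 f (df t)) ->
  exists2 c : R, x <= c /\ c <= y & f y - f x = df c * (y - x).
Proof.
move=> x0 xy hd.
have hd' : forall z, z \in `]x, y[ -> is_derive z 1 f (df z).
  by move=> z; rewrite in_itv /= => /andP[xz _]; apply: hd; apply: lt_trans xz.
have cont : {within `[x, y], continuous f}.
  apply: derivable_within_continuous => z; rewrite in_itv /= => /andP[xz _].
  by apply: ex_derive; apply: hd; exact: (lt_le_trans x0 xz).
have [c cI e] := MVT_segment xy hd' cont.
by exists c => //; move: cI; rewrite in_itv /= => /andP[].
Qed.


Lemma decay (g dg phi dphi : R -> R) (c B : R) : 0 < c ->
  (forall t : R, 0 < t -> is_derive t 1 g (dg t)) -> (forall t : R, 0 < t -> dg t <= 0) ->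
  (forall t : R, 0 < t -> is_derive t 1 phi (dphi t)) ->
  (forall t : R, 0 < t -> c * g t <= dphi t) ->
  0 <= B -> (forall t : R, 1 <= t -> phi t <= B * g t) ->
  forall T : R, 1 < T -> c * g T * (T - 1) <= B * g 1 - phi 1.
Proof.
move=> c0 hg dg0 hp dp B0 pB T T1.
have gdec : forall x y : R, 0 < x -> x <= y -> g y <= g x.
  move=> x y x0 xy; have [z [xz zy] e] := mvt_pos _ _ _ _ x0 xy hg.
  rewrite -subr_le0 e; apply: mulr_le0_ge0; last by rewrite subr_ge0.
  by apply: dg0; apply: lt_le_trans xz.
have [z [z1 zT] e] := mvt_pos _ _ _ _ ltr01 (ltW T1) hp.
have z0 : 0 < z by apply: lt_le_trans z1.
have h : c * g T * (T - 1) <= phi T - phi 1.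
  rewrite e; apply: ler_wpM2r; first by rewrite subr_ge0 ltW.
  apply: le_trans (dp z z0); apply: ler_wpM2l; first exact: ltW.
  exact: gdec.
apply: (le_trans h); apply: lerB => //; apply: (le_trans (pB _ (ltW T1))).
by apply: ler_wpM2l => //; apply: gdec => //; exact: ltW.
Qed.


Lemma lim_le (u : nat -> R) (l a : R) : u @ \oo --> l ->
  (\forall k \near \oo, u k <= a) -> l <= a.
Proof. move=> ul ev; have := @closed_cvg nat R _ _ u (fun x : R => x <= a) (@closed_le _ a) ev l ul.
by apply; exact: _. Qed.

Lemma lim_ge (u : nat -> R) (l a : R) : u @ \oo --> l ->
  (\forall k \near \oo, a <= u k) -> a <= l.
Proof. move=> ul ev; have := @closed_cvg nat R _ _ u (fun x : R => a <= x) (@closed_ge _ a) ev l ul.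
by apply; exact: _. Qed.

Lemma lim_eq (u w : nat -> R) (a b : R) : u @ \oo --> a -> w @ \oo --> b ->
  (\forall k \near \oo, u k = w k) -> a = b.
Proof.
move=> ua wb ev.
have d : (fun k => u k - w k) @ \oo --> a - b by apply: cvgB.
apply/eqP; rewrite -subr_eq0 eq_le; apply/andP; split.
  by apply: (lim_le _ _ _ d); apply: filterS ev => k ->; rewrite subrr.
by apply: (lim_ge _ _ _ d); apply: filterS ev => k ->; rewrite subrr.
Qed.

End Cn.

Arguments mxadjE {R n}.
Arguments mxadjK {R n}.
Arguments mxadjM {R n}.
Arguments mxadjD {R n}.
Arguments mxadjN {R n}.
Arguments mxadjB {R n}.
Arguments mxadjZ {R n}.
Arguments mxadj_scalar {R n}.
Arguments vst {R n}.
Arguments q {R n}.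
Arguments psd_q {R n}.
Arguments vst_mul {R n}.
Arguments qD {R n}.
Arguments qN {R n}.
Arguments qB {R n}.
Arguments qZ {R n}.
Arguments q_conj {R n}.
Arguments adj_tr {R n}.
Arguments q_entry {R n}.
Arguments tr_decomp {R n}.
Arguments tr_psd {R n}.
Arguments q1E {R n}.
Arguments qE {R n}.
Arguments term_le {R n}.
Arguments q_bound {R n}.
Arguments q_bound_psd {R n}.
Arguments q_sq {R n}.
Arguments sq_le {R n}.
Arguments acomb {R n}.
Arguments arr {R n}.
Arguments genD {R n}.
Arguments genZ {R n}.
Arguments genB {R n}.
Arguments genVV {R n}.
Arguments main_ineq {R n}.
Arguments trlin {R n}.
Arguments rlin {R n}.
Arguments tr_lind {R n}.
Arguments Re_sumc {R n}.
Arguments Re_tr {R n}.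
Arguments deriv_tr {R n}.
Arguments conjcE {R}.
Arguments ReDc {R}.
Arguments Re0c {R}.
Arguments ReNc {R}.
Arguments ReBc {R}.
Arguments ReMc {R}.
Arguments ReRM {R}.
Arguments Re_ge0 {R}.
Arguments Im_ge0 {R}.
Arguments mvt_pos {R}.
Arguments decay {R}.
Arguments lim_le {R}.
Arguments lim_ge {R}.
Arguments lim_eq {R}.

Section D.
Variable R : realType.
Local Notation C := R[i].
Variable n : nat.
Local Notation M := 'M[C]_n.

Lemma tr_entry (A : M) i j : \tr (A *m delta_mx j i) = A i j.
Proof.
rewrite /mxtrace (bigD1 i) //= big1 ?addr0.
  rewrite mxE (bigD1 j) //= big1 ?addr0; first by rewrite mxE !eqxx mulr1.
  by move=> k kj; rewrite mxE (negbTE kj) mulr0.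
move=> k ki; rewrite mxE big1 // => l _; rewrite mxE (negbTE ki).
by rewrite andbF mulr0.
Qed.

Lemma q_tr (A : M) v : q A v = \tr (A *m (v *m vst v)).
Proof.
have -> : q A v = \tr (vst v *m A *m v) by rewrite /q /mxtrace big_ord1.
by rewrite mxtrace_mulC !mulmxA mxtrace_mulC !mulmxA.
Qed.

Lemma Re_conjc (x : C) : complex.Re (x^*) = complex.Re x.
Proof. by case: x. Qed.
Lemma Im_conjc (x : C) : complex.Im (x^*) = - complex.Im x.
Proof. by case: x. Qed.
Lemma complex_ext (x y : C) : complex.Re x = complex.Re y -> complex.Im x = complex.Im y -> x = y.
Proof. by case: x => a b; case: y => c d /= -> ->. Qed.

Lemma half_C (c : R) : (c%:C%C / 2 : C) = (c / 2)%:C%C.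
Proof. by rewrite rmorphM fmorphV rmorph_nat. Qed.

Lemma comm_W (H V : M) (K : C) : V *m H = H *m V ->
  (V *m V - K *: V) *m H = H *m (V *m V - K *: V).
Proof.
move=> VH; rewrite mulmxBl mulmxBr -scalemxAl -scalemxAr VH.
by rewrite -mulmxA VH !mulmxA VH.
Qed.

End D.

Arguments tr_entry {R n}.
Arguments q_tr {R n}.
Arguments comm_W {R n}.
Arguments Re_conjc {R}.
Arguments Im_conjc {R}.
Arguments complex_ext {R}.
Arguments half_C {R}.
Section Main.
Variable R : realType.
Local Notation C := R[i].
Variable n : nat.
Local Notation M := 'M[C]_n.

Lemma main_sec (H L V : M) (c : R) :
  selfadj H -> lyapunov L V -> V *m H = H *m V -> 0 < c ->
  mxle (c%:C%C *: V) (dissip L V) ->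
  forall rho : R -> M, trajectory H L rho ->
  forall sigma : M, traj_limit_point rho sigma -> ZV V sigma.
Proof.
move=> _ [saV [psdV [_ mN]]] VH c0 mD rho traj sigma [s [soo hY]].
have pV : forall v, 0 <= q V v := psd_q _ psdV.
have pN : forall v, 0 <= q (0 - gen L V) v := psd_q _ mN.
have pD : forall v, 0 <= q (dissip L V - c%:C%C *: V) v := psd_q _ mD.
have [K [K0 hK]] := main_ineq L V c saV pV pN c0 pD.
have [bV [bV0 hbV]] := sq_le V saV pV.
have dens : forall t : R, 0 <= t -> density (rho t) := traj.1.
set g := fun t => complex.Re (\tr (V *m rho t)).
set W := V *m V - K *: V.
set phi := fun t => complex.Re (\tr (W *m rho t)).
have hg : forall t : R, 0 < t -> is_derive t 1 g (complex.Re (\tr (V *m lindblad H L (rho t)))).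
  by move=> t t0; exact: deriv_tr H L V rho t traj t0.
have hp : forall t : R, 0 < t -> is_derive t 1 phi (complex.Re (\tr (W *m lindblad H L (rho t)))).
  by move=> t t0; exact: deriv_tr H L W rho t traj t0.
have gpos : forall t : R, 0 <= t -> 0 <= g t.
  by move=> t t0; apply: Re_ge0; apply: tr_psd _ _ (dens t t0).1 pV.
have dg0 : forall t : R, 0 < t -> complex.Re (\tr (V *m lindblad H L (rho t))) <= 0.
  move=> t t0; rewrite tr_lind //.
  have h := tr_psd (rho t) (0 - gen L V) (dens t (ltW t0)).1 pN.
  rewrite mulmxBl mul0mx sub0r raddfN /= in h.
  by rewrite -oppr_ge0 -ReNc; apply: Re_ge0.
have dp : forall t : R, 0 < t -> c / 2 * g t <= complex.Re (\tr (W *m lindblad H L (rho t))).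
  move=> t t0; rewrite tr_lind; last exact: comm_W.
  have h := tr_psd (rho t) _ (dens t (ltW t0)).1 hK.
  rewrite mulmxBl raddfB /= -scalemxAl mxtraceZ in h.
  by have := Re_ge0 _ h; rewrite ReBc half_C ReRM subr_ge0.
have B0 : 0 <= complex.Re bV by apply: Re_ge0; apply: ltW.
have pB : forall t : R, 1 <= t -> phi t <= complex.Re bV * g t.
  move=> t t1; have t0 : 0 <= t by apply: le_trans t1.
  have hX : forall v, 0 <= q (bV *: V - V *m V) v.
    by move=> v; rewrite qB qZ subr_ge0.
  have h1 := tr_psd (rho t) _ (dens t t0).1 hX.
  rewrite mulmxBl raddfB /= -scalemxAl mxtraceZ in h1.
  have h2 := Re_ge0 _ h1; rewrite ReBc ReMc (Im_ge0 _ (ltW bV0)) mul0r subr0 subr_ge0 in h2.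
  have h3 : 0 <= complex.Re (K * \tr (V *m rho t)).
    by apply: Re_ge0; apply: mulr_ge0; [apply: ltW | apply: tr_psd _ _ (dens t t0).1 pV].
  rewrite /phi /W mulmxBl raddfB /= -scalemxAl mxtraceZ ReBc.
  apply: le_trans h2; rewrite lerBlDr lerDl; exact: h3.
have c20 : 0 < c / 2 by apply: divr_gt0.
have dec := decay g _ phi _ (c / 2) (complex.Re bV) c20 hg dg0 hp dp B0 pB.
set A := complex.Re bV * g 1 - phi 1 in dec.
have ev0 : forall M0 : R, \forall k \near \oo, M0 <= s k.
  by move=> M0; apply: ((cvgryPge s).1 soo M0).
have eq1 : forall k, complex.Re (\tr (rho (s k) *m V)) = g (s k).
  by move=> k; rewrite /g mxtrace_mulC.
have hgs := (hY V).1.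
have l0 : 0 <= complex.Re (\tr (sigma *m V)).
  apply: (lim_ge _ _ _ hgs); apply: filterS (ev0 0) => k hk.
  by rewrite eq1; apply: gpos.
have le_eps : forall e : R, 0 < e -> complex.Re (\tr (sigma *m V)) <= e.
  move=> e e0; set M0 := 2 + `|A| / (c / 2 * e).
  apply: (lim_le _ _ _ hgs); apply: filterS (ev0 M0) => k hk.
  rewrite eq1; set T := s k in hk *.
  have D0 : 0 <= `|A| / (c / 2 * e) by apply: divr_ge0 => //; apply: ltW; apply: mulr_gt0.
  have T1 : 1 < T by apply: lt_le_trans hk; rewrite /M0; lra.
  rewrite leNgt; apply/negP => gT.
  have h := dec T T1.
  have hD : c / 2 * e * (`|A| / (c / 2 * e)) = `|A|.
    by rewrite mulrC divfK // gt_eqF // mulr_gt0.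
  have h1 : c / 2 * e * (T - 1) < c / 2 * g T * (T - 1).
    by rewrite ltr_pM2r ?subr_gt0 // ltr_pM2l.
  have h2 : c / 2 * e * (1 + `|A| / (c / 2 * e)) <= c / 2 * e * (T - 1).
    by rewrite ler_pM2l ?mulr_gt0 //; rewrite /M0 in hk; lra.
  rewrite mulrDr mulr1 hD in h2.
  have h4 : A <= `|A| := ler_norm A.
  have h5 : 0 < c / 2 * e by apply: mulr_gt0.
  have h6 := lt_le_trans (lt_le_trans h1 h) h4.
  have h7 : `|A| < c / 2 * e + `|A| by apply: ltr_pwDl.
  have := lt_le_trans (lt_trans h6 h7) h2.
  by rewrite ltxx.
have l00 : complex.Re (\tr (sigma *m V)) = 0.
  apply/eqP; rewrite eq_le l0 andbT leNgt; apply/negP => lp.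
  have := le_eps _ (divr_gt0 lp (ltr0Sn _ 1)); lra.
have i00 : complex.Im (\tr (sigma *m V)) = 0.
  have hi := (hY V).2.
  have ev : \forall k \near \oo, complex.Im (\tr (rho (s k) *m V)) = 0.
    apply: filterS (ev0 0) => k hk; rewrite mxtrace_mulC.
    by apply: Im_ge0; apply: tr_psd _ _ (dens _ hk).1 pV.
  apply/eqP; rewrite eq_le; apply/andP; split.
    by apply: (lim_le _ _ _ hi); apply: filterS ev => k ->.
  by apply: (lim_ge _ _ _ hi); apply: filterS ev => k ->.
split; last first.
  rewrite mxtrace_mulC; apply: complex_ext; [exact: l00 | exact: i00].
split; first split.
- apply/matrixP => i j; rewrite mxadjE; apply: complex_ext.
  + rewrite Re_conjc.
    have := lim_eq _ _ _ _ (hY (delta_mx i j)).1 (hY (delta_mx j i)).1.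
    rewrite !tr_entry; apply; apply: filterS (ev0 0) => k hk.
    rewrite !tr_entry; have sa := (dens _ hk).1.1.
    by rewrite -{1}sa mxadjE Re_conjc.
  + rewrite Im_conjc.
    have := lim_eq _ _ _ _ (hY (delta_mx i j)).2 (cvgN (hY (delta_mx j i)).2).
    rewrite !tr_entry => e; rewrite e ?opprK //; apply: filterS (ev0 0) => k hk.
    rewrite !tr_entry; have sa := (dens _ hk).1.1.
    rewrite -{1}sa mxadjE Im_conjc.
    by change (- complex.Im (rho (s k) i j) = - complex.Im (\tr (rho (s k) *m delta_mx j i))); rewrite tr_entry.
- move=> v; change (0 <= q sigma v); rewrite q_tr lecE; apply/andP; split.
    apply/eqP; have hi := (hY (v *m vst v)).2.
    have ev : \forall k \near \oo, complex.Im (\tr (rho (s k) *m (v *m vst v))) = 0.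
      apply: filterS (ev0 0) => k hk; rewrite -q_tr.
      by apply: Im_ge0; exact: psd_q _ (dens _ hk).1 v.
    apply/eqP; rewrite eq_le; apply/andP; split.
      by apply: (lim_le _ _ _ hi); apply: filterS ev => k ->.
    by apply: (lim_ge _ _ _ hi); apply: filterS ev => k ->.
  apply: (lim_ge _ _ _ (hY (v *m vst v)).1); apply: filterS (ev0 0) => k hk.
  by rewrite -q_tr; apply: Re_ge0; exact: psd_q _ (dens _ hk).1 v.
- have hr := (hY 1%:M).1; have hi := (hY 1%:M).2.
  rewrite !mulmx1 in hr hi.
  have ev : \forall k \near \oo, \tr (rho (s k) *m 1%:M) = 1.
    by apply: filterS (ev0 0) => k hk; rewrite mulmx1; exact: (dens _ hk).2.
  apply: complex_ext.
    apply/eqP; rewrite eq_le; apply/andP; split.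
      by apply: (lim_le _ _ _ hr); apply: filterS ev => k ->.
    by apply: (lim_ge _ _ _ hr); apply: filterS ev => k ->.
  apply/eqP; rewrite eq_le; apply/andP; split.
    by apply: (lim_le _ _ _ hi); apply: filterS ev => k ->.
  by apply: (lim_ge _ _ _ hi); apply: filterS ev => k ->.
Qed.

End Main.


Theorem lemma12 (R : realType) (n : nat) (H L V : 'M[R[i]]_n) (c : R) :
  selfadj H ->
  lyapunov L V ->
  V *m H = H *m V ->
  0 < c ->
  mxle (c%:C%C *: V) (dissip L V) ->
  forall rho : R -> 'M[R[i]]_n,
    trajectory H L rho ->
    forall sigma : 'M[R[i]]_n, traj_limit_point rho sigma -> ZV V sigma.
Proof. exact: main_sec. Qed.
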